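(* Let $\{\triangleright\}\subseteq\sigma\subseteq\{\triangleright,\wedge,\mathrm{upd},\sqcup\}$. Then the class of $\sigma$-algebras that have a meet-complete representation by partial functions is a basic elementary class, axiomatisable by a single universal-existential-universal first-order sentence.
   Context: The operations are interpreted on partial functions as: $f \triangleright g = \{(x,y) \in g : x \notin \mathrm{dom}(f)\}$ (antidomain restriction); $f\wedge g = f\cap g$; $\mathrm{upd}(f,g)(x)$ is $f(x)$ if $f(x)$ defined and $g(x)$ undefined, $g(x)$ if both defined, undefined otherwise (update); $(f\sqcup g)(x)$ is $f(x)$ if defined, else $g(x)$ (preferential union). A representation by partial functions is an isomorphism onto an algebra of partial functions (on some base set) with these operations. Define $0 := a\triangleright a$, $a\lhd b := (a\triangleright b)\triangleright b$, $a \le b :\iff a\lhd b = a$; for representable algebras this is a partial order and $a\le b\iff\theta(a)\subseteq\theta(b)$ for every representation $\theta$. A representation $\theta$ is meet complete if $\theta(\bigwedge S)=\bigcap\theta[S]$ for every nonempty $S$ whose meet exists in $(\mathcal{A},\le)$. A basic elementary class is the class of models of a single first-order sentence. *)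

(* Defs.v *)
From Stdlib Require Import List Arith.
Import ListNotations.

Inductive Op : Type := ADom (* antidomain restriction |> *) | Meet | Upd | PJoin.

Definition Sig := Op -> bool.
Definition Sym (sigma : Sig) : Type := { o : Op | sigma o = true }.

Definition ops_on (sigma : Sig) (A : Type) : Type := Sym sigma -> A -> A -> A.

Inductive term (sigma : Sig) : Type :=
| Var : nat -> term sigma
| App : Sym sigma -> term sigma -> term sigma -> term sigma.
Arguments Var {sigma} _.
Arguments App {sigma} _ _ _.

Inductive form (sigma : Sig) : Type :=
| FEq : term sigma -> term sigma -> form sigma
| FFalse : form sigma
| FNot : form sigma -> form sigma
| FAnd : form sigma -> form sigma -> form sigma
| FOr : form sigma -> form sigma -> form sigma
| FImp : form sigma -> form sigma -> form sigma
| FAll : nat -> form sigma -> form sigma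
| FEx : nat -> form sigma -> form sigma.
Arguments FEq {sigma} _ _.
Arguments FFalse {sigma}.
Arguments FNot {sigma} _.
Arguments FAnd {sigma} _ _.
Arguments FOr {sigma} _ _.
Arguments FImp {sigma} _ _.
Arguments FAll {sigma} _ _.
Arguments FEx {sigma} _ _.

Fixpoint term_fv {sigma} (t : term sigma) : list nat :=
  match t with
  | Var n => [n]
  | App _ t1 t2 => term_fv t1 ++ term_fv t2
  end.

Fixpoint form_fv {sigma} (f : form sigma) : list nat :=
  match f with
  | FEq t1 t2 => term_fv t1 ++ term_fv t2
  | FFalse => []
  | FNot g => form_fv g
  | FAnd g h | FOr g h | FImp g h => form_fv g ++ form_fv h
  | FAll n g | FEx n g => remove Nat.eq_dec n (form_fv g)
  end.

Definition closed {sigma} (f : form sigma) : Prop := form_fv f = [].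

Fixpoint quantifier_free {sigma} (f : form sigma) : Prop :=
  match f with
  | FEq _ _ | FFalse => True
  | FNot g => quantifier_free g
  | FAnd g h | FOr g h | FImp g h => quantifier_free g /\ quantifier_free h
  | FAll _ _ | FEx _ _ => False
  end.

Definition alls {sigma} (xs : list nat) (f : form sigma) : form sigma :=
  fold_right FAll f xs.
Definition exs {sigma} (xs : list nat) (f : form sigma) : form sigma :=
  fold_right FEx f xs.

Definition AEA_form {sigma} (f : form sigma) : Prop :=
  exists (xs ys zs : list nat) (psi : form sigma),
    quantifier_free psi /\ f = alls xs (exs ys (alls zs psi)).

Definition env_upd {A : Type} (e : nat -> A) (n : nat) (a : A) : nat -> A :=
  fun m => if Nat.eqb m n then a else e m.

Fixpoint eval_term {sigma} {A : Type} (ops : ops_on sigma A) (e : nat -> A)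
  (t : term sigma) : A :=
  match t with
  | Var n => e n
  | App o t1 t2 => ops o (eval_term ops e t1) (eval_term ops e t2)
  end.

Fixpoint sat {sigma} {A : Type} (ops : ops_on sigma A) (e : nat -> A)
  (f : form sigma) : Prop :=
  match f with
  | FEq t1 t2 => eval_term ops e t1 = eval_term ops e t2
  | FFalse => False
  | FNot g => ~ sat ops e g
  | FAnd g h => sat ops e g /\ sat ops e h
  | FOr g h => sat ops e g \/ sat ops e h
  | FImp g h => sat ops e g -> sat ops e h
  | FAll n g => forall a : A, sat ops (env_upd e n a) g
  | FEx n g => exists a : A, sat ops (env_upd e n a) g
  end.

Definition models {sigma} {A : Type} (ops : ops_on sigma A) (f : form sigma) : Prop :=
  forall e : nat -> A, sat ops e f.

Definition pfun (X : Type) : Type := X -> X -> Prop.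
Definition functional {X} (f : pfun X) : Prop :=
  forall x y z, f x y -> f x z -> y = z.
Definition pdom {X} (f : pfun X) (x : X) : Prop := exists y, f x y.
Definition peq {X} (f g : pfun X) : Prop := forall x y, f x y <-> g x y.

Definition interp_op {X} (o : Op) (f g : pfun X) : pfun X :=
  match o with
  | ADom  => fun x y => g x y /\ ~ pdom f x
  | Meet  => fun x y => f x y /\ g x y
  | Upd   => fun x y => (f x y /\ ~ pdom g x) \/ (pdom f x /\ g x y)
  | PJoin => fun x y => f x y \/ (~ pdom f x /\ g x y)
  end.

Definition is_rep {sigma} {A : Type} (ops : ops_on sigma A) (X : Type)
  (theta : A -> pfun X) : Prop :=
  (forall a, functional (theta a)) /\
  (forall a b, peq (theta a) (theta b) -> a = b) /\
  (forall (o : Sym sigma) a b,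
      peq (theta (ops o a b)) (interp_op (proj1_sig o) (theta a) (theta b))).

Definition adom {sigma} {A : Type} (H : sigma ADom = true) (ops : ops_on sigma A)
  : A -> A -> A := ops (exist _ ADom H).

Definition ale {sigma} {A : Type} (H : sigma ADom = true) (ops : ops_on sigma A)
  (a b : A) : Prop :=
  adom H ops (adom H ops a b) b = a.

Definition is_meet {sigma} {A : Type} (H : sigma ADom = true) (ops : ops_on sigma A)
  (S : A -> Prop) (m : A) : Prop :=
  (forall s, S s -> ale H ops m s) /\
  (forall l, (forall s, S s -> ale H ops l s) -> ale H ops l m).

Definition meet_complete {sigma} {A : Type} (H : sigma ADom = true)
  (ops : ops_on sigma A) (X : Type) (theta : A -> pfun X) : Prop :=
  forall (S : A -> Prop) (m : A), (exists s, S s) -> is_meet H ops S m ->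
    peq (theta m) (fun x y => forall s, S s -> theta s x y).

Definition has_meet_complete_rep {sigma} {A : Type} (H : sigma ADom = true)
  (ops : ops_on sigma A) : Prop :=
  exists (X : Type) (theta : A -> pfun X), is_rep ops X theta /\ meet_complete H ops X theta.

(* Main.v *)
Require Import Defs.
From Stdlib Require Import List Arith Classical Eqdep_dec Bool.
Import ListNotations.

Definition ad {sigma} {A} (H : sigma ADom = true) (ops : ops_on sigma A) (x y : A) : A :=
  ops (exist _ ADom H) x y.
Definition res {sigma} {A} H (ops : ops_on sigma A) (x y : A) : A := ad H ops (ad H ops x y) y.
Definition Dm {sigma} {A} H (ops : ops_on sigma A) (a p : A) : Prop := res H ops a p = p.
Definition Vm {sigma} {A} H (ops : ops_on sigma A) (a p : A) : A := res H ops p a.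
Definition Atm {sigma} {A} H (ops : ops_on sigma A) (p : A) : Prop :=
  p <> ad H ops p p /\ forall c, res H ops c p = p \/ res H ops c p = ad H ops p p.

Definition Qsem {sigma} {A} H (ops : ops_on sigma A) (s : Sym sigma) (a b p : A) : Prop :=
  let u := ops s a b in
  match proj1_sig s with
  | ADom => ((Dm H ops u p -> Dm H ops b p /\ ~ Dm H ops a p) /\
             (Dm H ops b p /\ ~ Dm H ops a p -> Dm H ops u p)) /\
            (Dm H ops u p -> Vm H ops u p = Vm H ops b p)
  | Meet => ((Dm H ops u p -> Dm H ops a p /\ (Dm H ops b p /\ Vm H ops a p = Vm H ops b p)) /\
             (Dm H ops a p /\ (Dm H ops b p /\ Vm H ops a p = Vm H ops b p) -> Dm H ops u p)) /\
            (Dm H ops u p -> Vm H ops u p = Vm H ops a p)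
  | Upd => ((Dm H ops u p -> Dm H ops a p) /\ (Dm H ops a p -> Dm H ops u p)) /\
           ((Dm H ops a p /\ ~ Dm H ops b p -> Vm H ops u p = Vm H ops a p) /\
            (Dm H ops a p /\ Dm H ops b p -> Vm H ops u p = Vm H ops b p))
  | PJoin => ((Dm H ops u p -> Dm H ops a p \/ Dm H ops b p) /\
              (Dm H ops a p \/ Dm H ops b p -> Dm H ops u p)) /\
             ((Dm H ops a p -> Vm H ops u p = Vm H ops a p) /\
              (~ Dm H ops a p /\ Dm H ops b p -> Vm H ops u p = Vm H ops b p))
  end.

Definition Qord {sigma} {A} H (ops : ops_on sigma A) (a b p : A) : Prop :=
  (ale H ops a b /\ Dm H ops a p -> Dm H ops b p /\ Vm H ops a p = Vm H ops b p) /\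
  ((Dm H ops a p -> Dm H ops (Vm H ops a p) p) /\
   (Vm H ops (Vm H ops a p) p = Vm H ops a p /\ ale H ops (Vm H ops a p) a)).

Definition bad {sigma} {A} H (ops : ops_on sigma A) (a b p : A) : Prop :=
  ~ ((Dm H ops a p -> Dm H ops b p) /\ (Dm H ops b p -> Dm H ops a p)) \/
  (Dm H ops a p /\ ~ Vm H ops a p = Vm H ops b p).

Definition Axs {sigma} {A} H (ops : ops_on sigma A) : Prop :=
  (forall a b p, Atm H ops p -> (forall s, Qsem H ops s a b p) /\ Qord H ops a b p) /\
  (forall a b, (exists p, Atm H ops p /\ bad H ops a b p) \/ a = b).

Definition thC {sigma} {A} H (ops : ops_on sigma A) (a : A) : pfun A :=
  fun p v => Atm H ops p /\ Dm H ops a p /\ v = Vm H ops a p.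

Lemma pdom_thC {sigma} {A} H (ops : ops_on sigma A) a p :
  pdom (thC H ops a) p <-> Atm H ops p /\ Dm H ops a p.
Proof.
  unfold pdom, thC; split.
  - intros [v [h1 [h2 _]]]; auto.
  - intros [h1 h2]; exists (Vm H ops a p); auto.
Qed.

Lemma completeness {sigma} {A} H (ops : ops_on sigma A) :
  Axs H ops -> has_meet_complete_rep H ops.
Proof.
  intros [HQ HI].
  exists A, (thC H ops). split; [split; [|split] |].
  - intros a x y z [_ [_ ->]] [_ [_ ->]]; reflexivity.
  - intros a b Hp.
    destruct (HI a b) as [[p [Hat Hb]]|]; [|assumption].
    exfalso. destruct Hb as [Hb|[Hd Hv]].
    + apply Hb; split; intro Hd.
      * destruct (proj1 (Hp p _) (conj Hat (conj Hd eq_refl))) as [_ [? _]]; assumption.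
      * destruct (proj2 (Hp p _) (conj Hat (conj Hd eq_refl))) as [_ [? _]]; assumption.
    + destruct (proj1 (Hp p _) (conj Hat (conj Hd eq_refl))) as [_ [_ E]]. auto.
  - intros [o e] a b p v.
    destruct (classic (Atm H ops p)) as [Hat|Hnat].
    2:{ unfold thC; destruct o; simpl; unfold pdom, thC; split; intros; exfalso; firstorder. }
    destruct (HQ a b p Hat) as [Hs _]. specialize (Hs (exist _ o e)).
    destruct o; simpl in Hs |- *; rewrite ?pdom_thC; unfold thC.
    + destruct Hs as [[h1 h2] h3]. split.
      * intros [_ [Hd Hv]]. destruct (h1 Hd). rewrite Hv, h3 by assumption. tauto.
      * intros [[_ [Hd ->]] Hn].
        assert (Dm H ops a p -> False) by tauto.
        assert (Du : Dm H ops (ops (exist _ ADom e) a b) p) by auto.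
        rewrite h3 by auto. auto.
    + destruct Hs as [[h1 h2] h3]. split.
      * intros [_ [Hd Hv]]. destruct (h1 Hd) as [? [? E]].
        rewrite Hv, h3 by assumption. rewrite <- E. auto.
      * intros [[_ [Ha ->]] [_ [Hb E]]].
        assert (Du : Dm H ops (ops (exist _ Meet e) a b) p) by auto.
        rewrite h3 by auto. auto.
    + destruct Hs as [[h1 h2] [h3 h4]]. split.
      * intros [_ [Hd Hv]].
        destruct (classic (Dm H ops b p)).
        -- right. rewrite Hv, h4 by auto. split; [split; [exact Hat|apply h1; exact Hd]|split; [exact Hat|auto]].
        -- left. rewrite Hv, h3 by auto. split; [split; [exact Hat|split; [apply h1; exact Hd|reflexivity]]|tauto].
      * intros [[[_ [Ha ->]] Hn]|[[_ Ha] [_ [Hb ->]]]].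
        -- assert (~ Dm H ops b p) by tauto. rewrite h3 by auto. auto.
        -- rewrite h4 by auto. auto.
    + destruct Hs as [[h1 h2] [h3 h4]]. split.
      * intros [_ [Hd Hv]].
        destruct (classic (Dm H ops a p)).
        -- left. rewrite Hv, h3 by auto. auto.
        -- right. destruct (h1 Hd); [contradiction|]. rewrite Hv, h4 by auto. tauto.
      * intros [[_ [Ha ->]]|[Hn [_ [Hb ->]]]].
        -- rewrite h3 by auto. auto.
        -- assert (~ Dm H ops a p) by tauto. rewrite h4 by auto. auto.
  - intros S m [s0 Hs0] [Hlb Hgl] p v. unfold thC. split.
    + intros [Hat [Hd ->]] s Hs.
      destruct (HQ m s p Hat) as [_ [Ho _]].
      destruct (Ho (conj (Hlb s Hs) Hd)) as [Hd' Hv]. auto.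
    + intro Hall.
      destruct (Hall s0 Hs0) as [Hat [Hd0 Hv0]].
      assert (Hle : ale H ops v m).
      { apply Hgl. intros s Hs. destruct (Hall s Hs) as [_ [Hds Hvs]].
        subst v. rewrite Hvs. destruct (HQ s s p Hat) as [_ [_ [_ [_ Hq]]]]. exact Hq. }
      destruct (HQ s0 s0 p Hat) as [_ [_ [Hq1 [Hq2 _]]]].
      assert (Dv : Dm H ops v p) by (subst v; auto).
      destruct (HQ v m p Hat) as [_ [Ho _]].
      destruct (Ho (conj Hle Dv)) as [Dm' Ve].
      split; [auto|split; [auto|]].
      rewrite <- Ve. subst v. symmetry. exact Hq2.
Qed.

Lemma ex_dom_or_empty {X} (f : pfun X) :
  (exists x, pdom f x) \/ (forall x y, ~ f x y).
Proof.
  destruct (classic (exists x, pdom f x)) as [h|h]; [left; auto|right].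
  intros x y hf. apply h. exists x, y. exact hf.
Qed.

Lemma sound_main {sigma} {A} H (ops : ops_on sigma A) X (R : A -> pfun X) :
  is_rep ops X R -> meet_complete H ops X R -> Axs H ops.
Proof.
  intros [Hfun [Hinj Hhom]] Hmc.
  assert (Leq : forall a b, a = b <-> peq (R a) (R b)).
  { intros a b; split; [intros ->; intros x y; tauto| apply Hinj]. }
  assert (Lad : forall a b x y, R (ad H ops a b) x y <-> R b x y /\ ~ pdom (R a) x).
  { intros a b x y. exact (Hhom (exist _ ADom H) a b x y). }
  assert (Lres : forall a b x y, R (res H ops a b) x y <-> R b x y /\ pdom (R a) x).
  { intros a b x y. unfold res. rewrite Lad. unfold pdom at 1. split.
    - intros [h1 h2]. split; auto. apply NNPP. intro hn. apply h2. exists y. rewrite Lad.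
      split; auto.
    - intros [h1 h2]. split; auto. intros [y' hy']. rewrite Lad in hy'. tauto. }
  assert (LD : forall a p, Dm H ops a p <-> (forall x, pdom (R p) x -> pdom (R a) x)).
  { intros a p. unfold Dm. rewrite Leq. split.
    - intros h x [y hy]. apply (proj2 (h x y)) in hy. rewrite Lres in hy. tauto.
    - intros h x y. rewrite Lres. split; [tauto|]. intro hy. split; auto. apply h. exists y; auto. }
  assert (LV : forall a b p, Vm H ops a p = Vm H ops b p <->
       (forall x y, pdom (R p) x -> (R a x y <-> R b x y))).
  { intros a b p. unfold Vm. rewrite Leq. split.
    - intros h x y hp. specialize (h x y). rewrite !Lres in h. tauto.
    - intros h x y. rewrite !Lres. split; intros [h1 h2]; split; auto; apply (h x y h2); auto. }
  assert (LVR : forall a p x y, R (Vm H ops a p) x y <-> R a x y /\ pdom (R p) x).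
  { intros. unfold Vm. apply Lres. }
  assert (Lle : forall a b, ale H ops a b <-> (forall x y, R a x y -> R b x y)).
  { intros a b. change (res H ops a b = a <-> (forall x y, R a x y -> R b x y)). rewrite Leq. split.
    - intros h x y hy. apply (proj2 (h x y)) in hy. rewrite Lres in hy. tauto.
    - intros h x y. rewrite Lres. split.
      + intros [h1 [y' h2]]. assert (y = y') by (apply (Hfun b x); auto). subst; auto.
      + intro h1. split; auto. exists y; auto. }
  assert (Lzero : forall p x y, ~ R (ad H ops p p) x y).
  { intros p x y. rewrite Lad. intros [h1 h2]. apply h2. exists y; auto. }
  assert (LAt : forall p, Atm H ops p <-> (exists x, pdom (R p) x) /\
      forall c, (forall x, pdom (R p) x -> pdom (R c) x) \/ (forall x, pdom (R p) x -> ~ pdom (R c) x)).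
  { intro p. unfold Atm. split.
    - intros [h1 h2]. split.
      + destruct (ex_dom_or_empty (R p)) as [h|h]; auto. exfalso. apply h1. apply Leq.
        intros x y. split; [intro hh; exfalso; apply (h x y hh)|intro hh; exfalso; apply (Lzero p x y hh)].
      + intro c. destruct (h2 c) as [h|h]; [left; apply LD; exact h|right].
        intros x [y hy] hc. apply Leq in h. apply (Lzero p x y). apply h. rewrite Lres. split; auto.
    - intros [[x0 hx0] h2]. split.
      + intro e. destruct hx0 as [y0 hy0]. apply (Lzero p x0 y0). rewrite <- e. auto.
      + intro c. destruct (h2 c) as [h|h]; [left; apply LD; exact h|right].
        apply Leq. intros x y. rewrite Lres. split.
        * intros [hy hc]. exfalso. apply (h x); auto. exists y; auto.
        * intro hh. exfalso. apply (Lzero p x y hh). }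
  assert (Lpt : forall a x y, R a x y -> exists p, Atm H ops p /\ ale H ops p a /\ pdom (R p) x).
  { intros a x y hxy. apply NNPP. intro Hno.
    set (S := fun c => ale H ops c a /\ pdom (R c) x).
    set (m := ad H ops a a).
    assert (Hm : is_meet H ops S m).
    { split.
      - intros s _. apply Lle. intros u v hu. exfalso. apply (Lzero a u v hu).
      - intros l Hl. apply Lle. intros u v hu. exfalso.
        assert (Sa : S a) by (split; [apply Lle; auto| exists y; auto]).
        assert (la : forall u v, R l u v -> R a u v) by (apply Lle; apply Hl; exact Sa).
        destruct (classic (pdom (R l) x)) as [hx|hx].
        + apply Hno. exists l. split; [|split; [apply Lle; exact la|exact hx]].
          apply LAt. split; [exists x; exact hx|]. intro c.
          destruct (classic (pdom (R c) x)) as [hc|hc].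
          * left. assert (Ss : S (res H ops c l)).
            { split; [apply Lle; intros u' v' h'; rewrite Lres in h'; apply la; tauto|].
              destruct hx as [y' hy']. exists y'. rewrite Lres. auto. }
            apply Hl in Ss. rewrite Lle in Ss. intros z [w hw]. apply Ss in hw. rewrite Lres in hw. tauto.
          * right. assert (Ss : S (ad H ops c l)).
            { split; [apply Lle; intros u' v' h'; rewrite Lad in h'; apply la; tauto|].
              destruct hx as [y' hy']. exists y'. rewrite Lad. auto. }
            apply Hl in Ss. rewrite Lle in Ss. intros z [w hw]. apply Ss in hw. rewrite Lad in hw. tauto.
        + assert (Ss : S (ad H ops l a)).
          { split; [apply Lle; intros u' v' h'; rewrite Lad in h'; tauto|].
            exists y. rewrite Lad. auto. }
          apply Hl in Ss. rewrite Lle in Ss. pose proof (Ss u v hu) as hu2. rewrite Lad in hu2.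
          destruct hu2 as [_ hu2]. apply hu2. exists v. assumption. }
    assert (Sa : S a) by (split; [apply Lle; auto| exists y; auto]).
    pose proof (Hmc S m (ex_intro _ a Sa) Hm x y) as E.
    apply (Lzero a x y). fold m. apply (proj2 E).
    intros s [hs [y' hy']]. rewrite Lle in hs. assert (y = y') by (apply (Hfun a x); auto).
    subst; auto. }
  split.
  - intros a b p Hat. apply LAt in Hat. destruct Hat as [[x0 hx0] Hdi].
    split.
    + intros [o e]. unfold Qsem. simpl.
      pose proof (fun x y => Hhom (exist _ o e) a b x y) as Hu. simpl in Hu.
      set (u := ops (exist _ o e) a b) in *.

      destruct o; simpl in Hu |- *; rewrite ?LD, ?LV.
      * split; [split|].
        -- intro h. split. { intros x hx. destruct (h x hx) as [w hw]. rewrite Hu in hw. exists w; tauto. }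
           intro h'. destruct (h x0 hx0) as [w hw]. rewrite Hu in hw. apply (proj2 hw). apply h'. exact hx0.
        -- intros [h1 h2]. destruct (Hdi a) as [h|h]; [contradiction|].
           intros x hx. destruct (h1 x hx) as [w hw]. exists w. rewrite Hu. split; auto.
        -- intros h x y hx. rewrite Hu. split; [tauto|]. intro hb. split; auto.
           destruct (h x hx) as [w hw]. rewrite Hu in hw. tauto.
      * split; [split|].
        -- intro h. split; [|split].
           ++ intros x hx. destruct (h x hx) as [w hw]. rewrite Hu in hw. exists w; tauto.
           ++ intros x hx. destruct (h x hx) as [w hw]. rewrite Hu in hw. exists w; tauto.
           ++ intros x y hx. destruct (h x hx) as [w hw]. rewrite Hu in hw. destruct hw as [h1 h2].
              split; intro hh.
              ** assert (y = w) by (apply (Hfun a x); auto). subst; auto.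
              ** assert (y = w) by (apply (Hfun b x); auto). subst; auto.
        -- intros [h1 [h2 h3]] x hx. destruct (h1 x hx) as [w hw]. exists w. rewrite Hu.
           split; auto. apply (h3 x w hx); auto.
        -- intros h x y hx. rewrite Hu. split; [tauto|]. intro hh. split; auto.
           destruct (h x hx) as [w hw]. rewrite Hu in hw. destruct hw as [h1 h2].
           assert (y = w) by (apply (Hfun a x); auto). subst; auto.
      * split; [split|split].
        -- intros h x hx. destruct (h x hx) as [w hw]. rewrite Hu in hw.
           destruct hw as [[h1 _]|[h1 _]]; [exists w; auto|auto].
        -- intros h x hx. destruct (h x hx) as [w hw].
           destruct (classic (pdom (R b) x)) as [[w' hw']|hb].
           ++ exists w'. rewrite Hu. right. split; [exists w; exact hw|exact hw'].
           ++ exists w. rewrite Hu. left; auto.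
        -- intros [h1 h2] x y hx. destruct (Hdi b) as [h|h]; [contradiction|].
           rewrite Hu. split; [intros [[hh _]|[_ hh]]; auto; exfalso; apply (h x hx); exists y; auto|].
           intro hh. left. split; auto.
        -- intros [h1 h2] x y hx. rewrite Hu. split.
           ++ intros [[_ hh]|[_ hh]]; auto. exfalso; auto.
           ++ intro hh. right. auto.
      * split; [split|split].
        -- intro h. destruct (Hdi a) as [ha|ha]; [left; exact ha|right].
           intros x hx. destruct (h x hx) as [w hw]. rewrite Hu in hw.
           destruct hw as [hw|[_ hw]]; [exfalso; apply (ha x hx); exists w; auto|exists w; auto].
        -- intros [h|h] x hx.
           ++ destruct (h x hx) as [w hw]. exists w. rewrite Hu. auto.
           ++ destruct (classic (pdom (R a) x)) as [[w hw]|hna].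
              ** exists w. rewrite Hu. auto.
              ** destruct (h x hx) as [w hw]. exists w. rewrite Hu. auto.
        -- intros h x y hx. rewrite Hu. split; [|auto].
           intros [hh|[hn _]]; auto. exfalso. apply hn. apply h; auto.
        -- intros [h1 h2] x y hx. destruct (Hdi a) as [h|h]; [contradiction|].
           rewrite Hu. split; [intros [hh|[_ hh]]; auto; exfalso; apply (h x hx); exists y; auto|].
           intro hh. right. split; auto.
    + unfold Qord. rewrite !Lle, !LD, !LV. split; [|split; [|split]].
      * intros [hle hd]. split.
        -- intros x hx. destruct (hd x hx) as [w hw]. exists w; auto.
        -- intros x y hx. split; auto. intro hb. destruct (hd x hx) as [w hw].
           assert (y = w) by (apply (Hfun b x); auto). subst; auto.
      * intros hd x hx. destruct (hd x hx) as [w hw]. exists w. rewrite LVR. auto.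
      * intros x y hx. rewrite LVR. tauto.
      * intros x y. rewrite LVR. tauto.
  -
    assert (Key : forall a b x y, R a x y -> ~ R b x y ->
               exists p, Atm H ops p /\ bad H ops a b p).
    { intros a b x y hab hnb. destruct (Lpt a x y hab) as [p [Hat [Hle Hx]]].
      exists p. split; auto. rewrite Lle in Hle.
      assert (Da : Dm H ops a p) by (apply LD; intros z [w hw]; exists w; auto).
      destruct (classic (Dm H ops b p)) as [Db|Db].
      - right. split; auto. rewrite LV. intro h. apply hnb. apply (h x y Hx). auto.
      - left. tauto. }
    intros a b. destruct (classic (a = b)) as [e|ne]; [right; exact e|left].
    assert (~ peq (R a) (R b)) as hn by (intro h; apply ne; apply Hinj; exact h).
    apply not_all_ex_not in hn. destruct hn as [x hn]. apply not_all_ex_not in hn. destruct hn as [y hn].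
    destruct (classic (R a x y)) as [ha|ha].
    + apply (Key a b x y); auto. intro hb. apply hn. tauto.
    + assert (R b x y) by tauto. destruct (Key b a x y) as [p [Hat Hb]]; auto.
      exists p. split; auto. unfold bad in *.
      destruct Hb as [Hb|[Hd Hv]]; [left; tauto|].
      destruct (classic (Dm H ops a p)); [right; split; auto|left; tauto].
Qed.

Definition tad {sigma} (H : sigma ADom = true) (x y : term sigma) : term sigma :=
  App (exist _ ADom H) x y.
Definition tres {sigma} H (x y : term sigma) := tad H (tad H x y) y.
Definition fD {sigma} H (a p : term sigma) : form sigma := FEq (tres H a p) p.
Definition tV {sigma} H (a p : term sigma) := tres H p a.
Definition fle {sigma} H (a b : term sigma) : form sigma := FEq (tres H a b) a.
Definition fIff {sigma} (f g : form sigma) := FAnd (FImp f g) (FImp g f).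
Definition fAtPart {sigma} H (p c : term sigma) : form sigma :=
  FAnd (FNot (FEq p (tad H p p))) (FOr (FEq (tres H c p) p) (FEq (tres H c p) (tad H p p))).

Definition fQop {sigma} H (s : Sym sigma) (a b p : term sigma) : form sigma :=
  let u := App s a b in
  match proj1_sig s with
  | ADom => FAnd (fIff (fD H u p) (FAnd (fD H b p) (FNot (fD H a p))))
                 (FImp (fD H u p) (FEq (tV H u p) (tV H b p)))
  | Meet => FAnd (fIff (fD H u p) (FAnd (fD H a p) (FAnd (fD H b p) (FEq (tV H a p) (tV H b p)))))
                 (FImp (fD H u p) (FEq (tV H u p) (tV H a p)))
  | Upd => FAnd (fIff (fD H u p) (fD H a p))
                (FAnd (FImp (FAnd (fD H a p) (FNot (fD H b p))) (FEq (tV H u p) (tV H a p)))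
                      (FImp (FAnd (fD H a p) (fD H b p)) (FEq (tV H u p) (tV H b p))))
  | PJoin => FAnd (fIff (fD H u p) (FOr (fD H a p) (fD H b p)))
                (FAnd (FImp (fD H a p) (FEq (tV H u p) (tV H a p)))
                      (FImp (FAnd (FNot (fD H a p)) (fD H b p)) (FEq (tV H u p) (tV H b p))))
  end.

Definition fQord {sigma} H (a b p : term sigma) : form sigma :=
  FAnd (FImp (FAnd (fle H a b) (fD H a p)) (FAnd (fD H b p) (FEq (tV H a p) (tV H b p))))
   (FAnd (FImp (fD H a p) (fD H (tV H a p) p))
     (FAnd (FEq (tV H (tV H a p) p) (tV H a p)) (fle H (tV H a p) a))).

Definition fbad {sigma} H (a b p : term sigma) : form sigma :=
  FOr (FNot (fIff (fD H a p) (fD H b p)))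
      (FAnd (fD H a p) (FNot (FEq (tV H a p) (tV H b p)))).

Definition opt_sym (sigma : Sig) (o : Op) : option (Sym sigma) :=
  match bool_dec (sigma o) true with
  | left e => Some (exist _ o e)
  | right _ => None
  end.
Definition syms (sigma : Sig) : list (Sym sigma) :=
  flat_map (fun o => match opt_sym sigma o with Some s => [s] | None => [] end)
    [ADom; Meet; Upd; PJoin].

Lemma syms_complete sigma (s : Sym sigma) : In s (syms sigma).
Proof.
  destruct s as [o e].
  assert (E : opt_sym sigma o = Some (exist _ o e)).
  { unfold opt_sym. destruct (bool_dec (sigma o) true) as [e'|n].
    - rewrite (UIP_dec bool_dec e' e). reflexivity.
    - contradiction. }
  unfold syms. apply in_flat_map. exists o. split.
  - destruct o; simpl; auto.
  - rewrite E. left; reflexivity.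
Qed.

Fixpoint fconj {sigma} (l : list (form sigma)) : form sigma :=
  match l with
  | [] => FEq (Var 0) (Var 0)
  | f :: l => FAnd f (fconj l)
  end.

Definition fQall {sigma} H (a b p : term sigma) : form sigma :=
  FAnd (fconj (map (fun s => fQop H s a b p) (syms sigma))) (fQord H a b p).

Definition psi {sigma} H : form sigma :=
  FAnd (FOr (FNot (fAtPart H (Var 3) (Var 4))) (fQall H (Var 0) (Var 1) (Var 3)))
       (FOr (FAnd (fAtPart H (Var 5) (Var 6)) (fbad H (Var 0) (Var 1) (Var 5)))
            (FEq (Var 0) (Var 1))).

Definition phi {sigma} H : form sigma := alls [0;1;3] (exs [4;5] (alls [6] (psi H))).

Lemma qf_fconj {sigma} (l : list (form sigma)) :
  (forall f, In f l -> quantifier_free f) -> quantifier_free (fconj l).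
Proof.
  induction l; simpl; intros h; [exact I|]. split; auto.
Qed.

Lemma qf_psi {sigma} H : quantifier_free (psi (sigma:=sigma) H).
Proof.
  unfold psi, fQall. simpl. repeat split; try exact I.
  apply qf_fconj. intros f hf. apply in_map_iff in hf. destruct hf as [[[] e] [<- _]];
  simpl; repeat split; exact I.
Qed.

Definition V6 := [0;1;3;4;5;6].

Lemma fv_fconj {sigma} (l : list (form sigma)) :
  (forall f, In f l -> incl (form_fv f) V6) -> incl (form_fv (fconj l)) V6.
Proof.
  induction l; simpl; intros h.
  - intros x [<-|[<-|[]]]; simpl; auto.
  - apply incl_app; auto.
Qed.

Ltac inclV := intros ?x ?hx; simpl in hx; unfold V6; simpl;
  repeat (destruct hx as [hx|hx]; [subst; tauto|]); contradiction.

Lemma fv_Qop {sigma} H (s : Sym sigma) : incl (form_fv (fQop H s (Var 0) (Var 1) (Var 3))) V6.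
Proof.
  destruct s as [[] e]; intros x hx; simpl in hx; unfold V6; simpl;
  decompose [or] hx; subst; tauto.
Qed.

Lemma fv_psi {sigma} H : incl (form_fv (psi (sigma:=sigma) H)) V6.
Proof.
  intros x hx. unfold psi, fQall in hx. simpl in hx. rewrite ?in_app_iff in hx.
  assert (HC : In x (form_fv (fconj (map (fun s => fQop H s (Var 0) (Var 1) (Var 3)) (syms sigma))))
     -> In x V6).
  { apply fv_fconj. intros f hf. apply in_map_iff in hf. destruct hf as [s [<- _]]. apply fv_Qop. }
  decompose [or] hx; clear hx; try (subst; unfold V6; simpl; tauto); try (apply HC; assumption);
  repeat match goal with
  | h : In _ _ |- _ => simpl in h; decompose [or] h; clear h; try (subst; unfold V6; simpl; tauto)
  end.
Qed.

Lemma remove_all (l : list nat) : incl l V6 ->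
  remove Nat.eq_dec 0 (remove Nat.eq_dec 1 (remove Nat.eq_dec 3
   (remove Nat.eq_dec 4 (remove Nat.eq_dec 5 (remove Nat.eq_dec 6 l))))) = [].
Proof.
  induction l as [|x l IH]; intro h; [reflexivity|].
  assert (hl : incl l V6) by (intros y hy; apply h; right; exact hy).
  specialize (IH hl).
  assert (hx : In x V6) by (apply h; left; reflexivity).
  unfold V6 in hx; simpl in hx.
  repeat (destruct hx as [hx|hx]; [subst; simpl; exact IH|]). contradiction.
Qed.

Lemma phi_closed {sigma} H : closed (phi (sigma:=sigma) H).
Proof.
  unfold closed.
  transitivity (remove Nat.eq_dec 0 (remove Nat.eq_dec 1 (remove Nat.eq_dec 3
   (remove Nat.eq_dec 4 (remove Nat.eq_dec 5 (remove Nat.eq_dec 6 (form_fv (psi (sigma:=sigma) H)))))))).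
  - reflexivity.
  - apply remove_all. apply fv_psi.
Qed.

Lemma phi_AEA {sigma} H : AEA_form (phi (sigma:=sigma) H).
Proof.
  exists [0;1;3], [4;5], [6], (psi H). split; [apply qf_psi|reflexivity].
Qed.

Lemma sat_fQop {sigma} {A} H (ops : ops_on sigma A) e s x y z :
  sat ops e (fQop H s x y z) <->
  Qsem H ops s (eval_term ops e x) (eval_term ops e y) (eval_term ops e z).
Proof. destruct s as [[] e0]; split; intro h; exact h. Qed.

Lemma sat_fQord {sigma} {A} H (ops : ops_on sigma A) e x y z :
  sat ops e (fQord H x y z) <->
  Qord H ops (eval_term ops e x) (eval_term ops e y) (eval_term ops e z).
Proof. split; intro h; exact h. Qed.

Lemma sat_fconj {sigma} {A} (ops : ops_on sigma A) e (l : list (form sigma)) :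
  sat ops e (fconj l) <-> (forall f, In f l -> sat ops e f).
Proof.
  induction l; simpl.
  - split; [tauto|reflexivity].
  - rewrite IHl. split.
    + intros [h1 h2] f [<-|hf]; auto.
    + intros h; split; auto.
Qed.

Definition AtP {sigma} {A} H (ops : ops_on sigma A) (p c : A) : Prop :=
  p <> ad H ops p p /\ (res H ops c p = p \/ res H ops c p = ad H ops p p).

Lemma sat_psi {sigma} {A} H (ops : ops_on sigma A) e :
  sat ops e (psi H) <->
  ((~ AtP H ops (e 3) (e 4)) \/
     ((forall s, Qsem H ops s (e 0) (e 1) (e 3)) /\ Qord H ops (e 0) (e 1) (e 3))) /\
  ((AtP H ops (e 5) (e 6) /\ bad H ops (e 0) (e 1) (e 5)) \/ e 0 = e 1).
Proof.
  unfold psi, fQall.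
  change (sat ops e (FAnd ?a ?b)) with (sat ops e a /\ sat ops e b).
  change (sat ops e (FOr ?a ?b)) with (sat ops e a \/ sat ops e b).
  change (sat ops e (FAnd ?a ?b)) with (sat ops e a /\ sat ops e b).
  rewrite sat_fconj, sat_fQord.
  assert (E : (forall f, In f (map (fun s => fQop H s (Var 0) (Var 1) (Var 3)) (syms sigma)) ->
                sat ops e f) <-> (forall s, Qsem H ops s (e 0) (e 1) (e 3))).
  { split.
    - intros h s.
      pose proof (proj1 (sat_fQop H ops e s (Var 0) (Var 1) (Var 3))) as K. apply K. apply h.
      apply (in_map (fun s => fQop H s (Var 0) (Var 1) (Var 3))). apply syms_complete.
    - intros h f hf. apply in_map_iff in hf. destruct hf as [s [<- _]].
      apply sat_fQop. apply h. }
  rewrite E. unfold AtP, bad. simpl. reflexivity.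
Qed.

Lemma models_phi {sigma} {A} H (ops : ops_on sigma A) :
  models ops (phi H) <-> Axs H ops.
Proof.
  unfold models, phi, alls, exs. cbn [fold_right sat]. split.
  - intros Hm. split.
    + intros a b p Hat.
      destruct (Hm (fun _ => a) a b p) as [c [p' Hc]].
      specialize (Hc a). apply sat_psi in Hc. unfold env_upd in Hc; simpl in Hc.
      destruct Hc as [[Hn|Hq] _]; [|exact Hq].
      exfalso. apply Hn. destruct Hat as [h1 h2]. split; auto.
    + intros a b.
      destruct (Hm (fun _ => a) a b a) as [c [p' Hc]].
      destruct (classic (a = b)) as [e|ne]; [right; exact e|left].
      exists p'.
      assert (HH : forall c', AtP H ops p' c' /\ bad H ops a b p').
      { intro c'. specialize (Hc c'). apply sat_psi in Hc. unfold env_upd in Hc; simpl in Hc.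
        destruct Hc as [_ [h|h]]; [exact h|contradiction]. }
      split; [|exact (proj2 (HH a))].
      split; [exact (proj1 (proj1 (HH a)))|].
      intro c'. exact (proj2 (proj1 (HH c'))).
  - intros [HQ HI] e a b p.
    assert (Hc : exists c, ~ AtP H ops p c \/
                 ((forall s, Qsem H ops s a b p) /\ Qord H ops a b p)).
    { destruct (classic (exists c, ~ AtP H ops p c)) as [[c hc]|hn].
      - exists c. left. exact hc.
      - exists p. right. apply HQ. split.
        + intro E. apply hn. exists p. intros [h _]. contradiction.
        + intro c. apply NNPP. intro h. apply hn. exists c. intros [_ h2]. contradiction. }
    destruct Hc as [c Hc].
    destruct (HI a b) as [[p' [Hat Hb]]|Heq].
    + exists c, p'. intro c'. apply sat_psi. unfold env_upd; simpl.
      split; [exact Hc|left]. split; [|exact Hb].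
      destruct Hat as [h1 h2]. split; auto.
    + exists c, a. intro c'. apply sat_psi. unfold env_upd; simpl.
      split; [exact Hc|right; exact Heq].
Qed.

Theorem theorem7p1 (sigma : Sig) (H : sigma ADom = true) :
  exists phi : form sigma,
    closed phi /\ AEA_form phi /\
    forall (A : Type) (ops : ops_on sigma A),
      models ops phi <-> has_meet_complete_rep H ops.
Proof.
  exists (phi H). split; [apply phi_closed|split; [apply phi_AEA|]].
  intros A ops. rewrite models_phi. split.
  - apply completeness.
  - intros [X [R [Hr Hm]]]. exact (sound_main H ops X R Hr Hm).
Qed.
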